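(* Let $H \cong K_n - M$, where $M$ is a matching of $K_n$, and let $g$ be a demand function for $H$. Let $V(M)$ denote the set of endpoints of edges in $M$. If $L$ is a fractional list-assignment for $H$ such that (i) for each $v\in V(H)\setminus V(M)$, $\mu(L(v)) \geq \sum_{u\in V(H)\setminus V(M)}g(u) + \sum_{uw\in M}\max\{g(u), g(w)\}$, (ii) for each $v\in V(M)$, $\mu(L(v)) \geq g(v) + \sum_{uw\in M,\, v\notin \{u,w\}}\max\{g(u), g(w)\}$, and (iii) for each $uv\in M$, $\mu(L(u)) + \mu(L(v)) \geq \sum_{w\in V(H)}g(w)$, then $H$ has a fractional $(g, L)$-coloring.
   Context: $\mu$ is Lebesgue measure. A demand function for a graph $H$ is a function $g: V(H)\to [0,1]\cap\mathbb{Q}$. A fractional list-assignment is a function $L$ assigning to each vertex a measurable subset $L(v)\subseteq[0,1]$. A fractional $(g,L)$-coloring of $H$ is an assignment $\phi$ of measurable sets $\phi(v)\subseteq L(v)$ with $\mu(\phi(v))\geq g(v)$ for every vertex and $\phi(u)\cap\phi(v)=\varnothing$ for every edge $uv$ of $H$. *)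

(* Defs.v *)
From mathcomp Require Import all_boot all_order all_algebra.
From mathcomp Require Import all_classical all_reals all_analysis.
Set Implicit Arguments. Unset Strict Implicit. Unset Printing Implicit Defensive.
Import Order.TTheory GRing.Theory Num.Theory.
Local Open Scope ring_scope.

(* Lebesgue measurability on R: Caratheodory-measurable sets for the outer
   measure built from the length of intervals, i.e. exactly the sigma-algebra
   on which the completed Lebesgue measure [completed_lebesgue_measure] lives. *)
Definition lmeas (R : realType) (A : set R) : Prop :=
  ((wlength (idfun : R -> R))^*%mu.-cara.-measurable A)%classic.

Definition lmu (R : realType) (A : set R) : \bar R :=
  @completed_lebesgue_measure R A.

(* M is a matching of the complete graph K_n on vertex set V (n = #|V|):
   a set of 2-element vertex sets that are pairwise disjoint. *)
Definition is_matching (V : finType) (M : {set {set V}}) : Prop :=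
  (forall e, e \in M -> #|e| = 2) /\
  (forall e1 e2, e1 \in M -> e2 \in M -> e1 != e2 -> [disjoint e1 & e2]).

Definition Hadj (V : finType) (M : {set {set V}}) (u v : V) : bool :=
  ((u != v) && ([set u; v] \notin M))%B.

Definition VM (V : finType) (M : {set {set V}}) : {set V} := finset.cover M.

Definition demand (V : finType) (g : V -> rat) : Prop :=
  forall v, 0 <= g v <= 1.

(* max{g(u), g(w)} for an edge e = {u, w} (g is nonnegative). *)
Definition emax (V : finType) (g : V -> rat) (e : {set V}) : rat :=
  \big[Num.max/0]_(u in e) g u.

Local Open Scope classical_set_scope.

Definition frac_list_assignment (R : realType) (V : finType) (L : V -> set R) : Prop :=
  forall v, lmeas (L v) /\ L v `<=` `[0, 1]%classic.

Definition frac_coloring (R : realType) (V : finType) (M : {set {set V}})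
    (g : V -> rat) (L : V -> set R) (phi : V -> set R) : Prop :=
  (forall v, [/\ lmeas (phi v), phi v `<=` L v & ((ratr (g v) : R)%:E <= lmu (phi v))%E]) /\
  (forall u v, Hadj M u v -> phi u `&` phi v = set0).

(* Main.v *)
Require Import Defs.
From mathcomp Require Import all_boot all_order all_algebra.
From mathcomp Require Import all_classical all_reals all_analysis.
From mathcomp Require Import lra.
Import Order.TTheory GRing.Theory Num.Theory.
Local Open Scope ring_scope.
Local Open Scope classical_set_scope.
Set Implicit Arguments. Unset Strict Implicit. Unset Printing Implicit Defensive.

Section Meas.
Variable R : realType.

Lemma lmu_oc (a b : R) : a <= b -> lmu `]a, b] = (b - a)%:E.
Proof.
move=> ab; rewrite /lmu /completed_lebesgue_measure /completed_lebesgue_stieltjes_measure /=.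
rewrite /completed_measure_extension measurable_mu_extE /=; first by rewrite wlength_itv_bnd.
exact: is_ocitv.
Qed.

Lemma lmeas_oc (a b : R) : lmeas `]a, b].
Proof. by apply: sub_caratheodory; apply: sub_sigma_algebra; exact: is_ocitv. Qed.

Definition G (A : set R) := lmeas A /\ A `<=` `[0, 1].
Definition m (A : set R) : R := fine (lmu A).

Lemma lmeasI (A B : set R) : lmeas A -> lmeas B -> lmeas (A `&` B).
Proof. exact: measurableI. Qed.
Lemma lmeasD (A B : set R) : lmeas A -> lmeas B -> lmeas (A `\` B).
Proof. exact: measurableD. Qed.
Lemma lmeasU (A B : set R) : lmeas A -> lmeas B -> lmeas (A `|` B).
Proof. exact: measurableU. Qed.
Lemma lmeas0 : lmeas (set0 : set R).
Proof. exact: measurable0. Qed.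

Lemma GI (A B : set R) : G A -> lmeas B -> G (A `&` B).
Proof. by move=> [mA sA] mB; split; [exact: lmeasI | move=> x [/sA]]. Qed.
Lemma GD (A B : set R) : G A -> lmeas B -> G (A `\` B).
Proof. by move=> [mA sA] mB; split; [exact: lmeasD | move=> x [/sA]]. Qed.
Lemma GU (A B : set R) : G A -> G B -> G (A `|` B).
Proof. by move=> [mA sA] [mB sB]; split; [exact: lmeasU | move=> x [/sA|/sB]]. Qed.
Lemma G0 : G set0.
Proof. by split; [exact: lmeas0 | move=> x]. Qed.
Lemma GS (A B : set R) : G B -> lmeas A -> A `<=` B -> G A.
Proof. by move=> [mB sB] mA AB; split => // x /AB /sB. Qed.

Lemma lmu_ge0 (A : set R) : (0 <= lmu A)%E.
Proof. exact: measure_ge0. Qed.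

Lemma lmu_le (A B : set R) : lmeas A -> lmeas B -> A `<=` B -> (lmu A <= lmu B)%E.
Proof. by move=> mA mB AB; apply: le_measure => //; rewrite inE. Qed.

Lemma lmuU (A B : set R) : lmeas A -> lmeas B -> A `&` B = set0 ->
  lmu (A `|` B) = (lmu A + lmu B)%E.
Proof. by move=> *; apply: measureU. Qed.
Lemma lmuDI (A B : set R) : lmeas A -> lmeas B -> lmu A = (lmu (A `\` B) + lmu (A `&` B))%E.
Proof. by move=> *; apply: measureDI. Qed.

Lemma G_fin (A : set R) : G A -> lmu A = (m A)%:E.
Proof.
move=> [mA sA]; rewrite /m fineK // ge0_fin_numE ?lmu_ge0 //.
have sub : A `<=` `]-1, 1].
  move=> x /sA; rewrite /= !in_itv /= => /andP[x0 x1]; rewrite x1 andbT.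
  by apply: lt_le_trans x0; rewrite ltrN10.
have H := lmu_le mA (lmeas_oc _ _) sub. apply: (le_lt_trans H).
by rewrite lmu_oc ?ltry // lerN10.
Qed.

Lemma m_ge0 (A : set R) : 0 <= m A.
Proof. by rewrite /m fine_ge0 // lmu_ge0. Qed.

Lemma mU (A B : set R) : G A -> G B -> A `&` B = set0 -> m (A `|` B) = m A + m B.
Proof.
move=> GA GB AB.
have := lmuU GA.1 GB.1 AB.
by rewrite (G_fin (GU GA GB)) (G_fin GA) (G_fin GB) -EFinD => -[->].
Qed.

Lemma mle (A B : set R) : G B -> lmeas A -> A `<=` B -> m A <= m B.
Proof.
move=> GB mA AB; have GA := GS GB mA AB.
have := lmu_le mA GB.1 AB; by rewrite (G_fin GA) (G_fin GB) lee_fin.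
Qed.

Lemma mDI (A B : set R) : G A -> lmeas B -> m A = m (A `\` B) + m (A `&` B).
Proof.
move=> GA mB.
have := lmuDI GA.1 mB.
rewrite (G_fin GA) (G_fin (GD GA mB)) (G_fin (GI GA mB)) -EFinD.
by move=> [].
Qed.

Lemma mD (A B : set R) : G A -> lmeas B -> B `<=` A -> m (A `\` B) = m A - m B.
Proof.
move=> GA mB BA; rewrite (mDI GA mB); have -> : A `&` B = B.
  by apply/seteqP; split => x /=; [case | move=> Bx; split => //; exact: BA].
by rewrite addrK.
Qed.

Lemma m0 : m set0 = 0.
Proof. by rewrite /m /lmu measure0. Qed.

Definition pre (A : set R) (x : R) := A `&` `]-1, x].

Lemma pre_lip (A : set R) (x y : R) : G A -> x <= y ->
  0 <= m (pre A y) - m (pre A x) <= y - x.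
Proof.
move=> GA xy.
have GAy : G (pre A y) by apply: GI GA (lmeas_oc _ _).
have mx : lmeas `]-1, x] by exact: lmeas_oc.
have E : pre A y `&` `]-1, x] = pre A x.
  apply/seteqP; split => z /=; first by case=> -[].
  case=> Az; rewrite /= !in_itv /= => /andP[z1 zx].
  by split; [split => //; rewrite /= in_itv /= z1 /= (le_trans zx xy) | rewrite z1 zx].
rewrite (mDI GAy mx) E addrK; apply/andP; split; first exact: m_ge0.
pose D := pre A y `\` `]-1, x]; pose I := `]x, y]%classic.
have : (lmu D <= lmu I)%E.
  apply: lmu_le; [exact: lmeasD (GAy.1) mx | exact: lmeas_oc|].
  move=> z [[Az]]; rewrite /I /= !in_itv /= => /andP[z1 zy] H.
  rewrite zy andbT; rewrite ltNge; apply/negP => zx; apply: H.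
  by rewrite z1.
by rewrite (G_fin (GD GAy mx)) lmu_oc // lee_fin.
Qed.
End Meas.

Section Chunk.
Variable R : realType.
Import numFieldNormedType.Exports.

Lemma lip_cont (f : R -> R) : (forall x y, `|f y - f x| <= `|y - x|) -> continuous f.
Proof.
move=> fL x; apply/cvgrPdist_le => e e0.
exists e => //= y; rewrite /ball /= => xy.
by rewrite (le_trans (fL y x)) // ltW.
Qed.

Lemma ivt2 (f : R -> R) (a b v : R) : a <= b ->
  (forall x y, `|f y - f x| <= `|y - x|) ->
  (f a <= v <= f b \/ f b <= v <= f a) -> exists2 c, a <= c <= b & f c = v.
Proof.
move=> ab fL hv.
have fc : {within `[a, b], continuous f}.
  by apply: continuous_subspaceT; exact: lip_cont.
have hv' : Num.min (f a) (f b) <= v <= Num.max (f a) (f b).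
  case: hv => /andP[h1 h2]; apply/andP; split.
  - by rewrite ge_min h1.
  - by rewrite le_max h2 orbT.
  - by rewrite ge_min h1 orbT.
  - by rewrite le_max h2.
have [c] := IVT ab fc hv'.
by rewrite in_itv /= => cab fcv; exists c.
Qed.

Lemma pre_lip_abs (A : set R) : G A -> forall x y,
  `|m (pre A y) - m (pre A x)| <= `|y - x|.
Proof.
move=> GA x y; case: (leP x y) => xy.
  have /andP[h1 h2] := pre_lip GA xy.
  by rewrite ger0_norm // ger0_norm ?subr_ge0.
have /andP[h1 h2] := pre_lip GA (ltW xy).
by rewrite distrC [`|y - x|]distrC ger0_norm // ger0_norm ?subr_ge0 // ltW.
Qed.

Lemma pre_low (A : set R) : pre A (-1) = set0.
Proof.
apply/seteqP; split => z //= [_]; rewrite /= in_itv /= => /andP[h1 h2].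
by move: (lt_le_trans h1 h2); rewrite ltxx.
Qed.

Lemma pre_high (A : set R) : G A -> pre A 1 = A.
Proof.
move=> [_ sA]; apply/seteqP; split => z /=; first by case.
move=> Az; split => //; move: (sA _ Az); rewrite /= !in_itv /= => /andP[z0 z1].
by rewrite z1 andbT (lt_le_trans _ z0) // ltrN10.
Qed.

Lemma chunk (A : set R) (t : R) : G A -> 0 <= t <= m A ->
  exists C, [/\ G C, C `<=` A & m C = t].
Proof.
move=> GA ht.
have H : m (pre A (-1)) <= t <= m (pre A 1) by rewrite pre_low m0 pre_high.
have h11 : (-1 : R) <= 1 := le_trans (lerN10 R) ler01.
have [c _ hc] := ivt2 h11 (pre_lip_abs GA) (or_introl H).
exists (pre A c); split => //; first exact: GI GA (lmeas_oc _ _).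
by move=> z [].
Qed.
End Chunk.
Section NUsec.
Variables (R : realType) (V : finType).
Definition NU (L : V -> set R) (S : {set V}) : set R := \big[setU/set0]_(v in S) L v.

Lemma bigU_mem (L : V -> set R) (r : seq V) (P : pred V) x :
  (\big[setU/set0]_(v <- r | P v) L v) x <-> exists2 v, (v \in r) && P v & L v x.
Proof.
elim: r => [|a r IH]; first by rewrite big_nil; split => // -[].
rewrite big_cons; case Pa: (P a).
  split.
    case=> [La|/IH [v /andP[vr Pv] Lv]]; first by exists a; rewrite ?inE ?eqxx ?Pa.
    by exists v => //; rewrite inE vr orbT Pv.
  case=> v /andP[]; rewrite inE => /orP[/eqP-> _ La|vr Pv Lv]; first by left.
  by right; apply/IH; exists v; rewrite ?vr ?Pv.
rewrite IH; split; case=> v /andP[vr Pv] Lv; exists v => //; rewrite ?inE ?vr ?orbT ?Pv //.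
by move: vr; rewrite inE => /orP[/eqP Ev|->]; [rewrite Ev Pa in Pv|].
Qed.

Lemma NU_mem (L : V -> set R) (S : {set V}) x :
  NU L S x <-> exists2 v, v \in S & L v x.
Proof.
rewrite /NU bigU_mem; split; case=> v /=.
  by move=> /andP[_ vS] Lv; exists v.
by move=> vS Lv; exists v; rewrite ?mem_index_enum.
Qed.

End NUsec.

Section NUlemmas.
Variables (R : realType) (V : finType).
Implicit Types (L : V -> set R) (S X Y : {set V}).

Lemma NU_sub L S v : v \in S -> L v `<=` NU L S.
Proof. by move=> vS x Lx; apply/NU_mem; exists v. Qed.

Lemma NU_meas L S : (forall v, lmeas (L v)) -> lmeas (NU L S).
Proof. by move=> mL; apply: bigsetU_measurable => i _; exact: mL. Qed.

Lemma GNU L S : (forall v, G (L v)) -> G (NU L S).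
Proof.
move=> GL; split; first by apply: NU_meas => v; case: (GL v).
by move=> x /NU_mem [v _ Lv]; case: (GL v) => _; apply.
Qed.

Lemma NU1 L v : NU L [set v] = L v.
Proof.
apply/seteqP; split => x; first by case/NU_mem => u; rewrite inE => /eqP->.
by move=> Lx; apply/NU_mem; exists v; rewrite ?inE.
Qed.

Lemma NU0 L : NU L finset.set0 = set0.
Proof. by apply/seteqP; split => x // /NU_mem [u]; rewrite inE. Qed.

Lemma NUD L S (C : set R) : NU (fun u => L u `\` C) S = NU L S `\` C.
Proof.
apply/seteqP; split => x.
  by case/NU_mem => u uS [Lu Cx]; split => //; apply/NU_mem; exists u.
by move=> [/NU_mem [u uS Lu] Cx]; apply/NU_mem; exists u.
Qed.

Lemma NUU L X Y : NU L (X :|: Y) = NU L X `|` NU L Y.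
Proof.
apply/seteqP; split => x.
  case/NU_mem => u; rewrite inE => /orP[uX|uY] Lu; [left|right]; apply/NU_mem; by exists u.
by case=> /NU_mem [u uS Lu]; apply/NU_mem; exists u; rewrite // inE uS ?orbT.
Qed.

Lemma NU_mono L X Y : X \subset Y -> NU L X `<=` NU L Y.
Proof.
move=> XY x /NU_mem [u uX Lu]; apply/NU_mem; exists u => //.
by move/fintype.subsetP: XY; apply.
Qed.

Lemma NU_eq L L' S : (forall v, v \in S -> L v = L' v) -> NU L S = NU L' S.
Proof.
move=> E; apply/seteqP; split => x /NU_mem [u uS Lu]; apply/NU_mem; exists u => //;
  by rewrite ?(E u uS) // -(E u uS).
Qed.

End NUlemmas.

Section MinLemmas.
Variable R : realType.

Lemma bigmin_le (I : eqType) (r : seq I) (P : pred I) (F : I -> R) i :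
  i \in r -> P i -> \big[Num.min/1]_(j <- r | P j) F j <= F i.
Proof.
elim: r => [//|a r IH]; rewrite inE big_cons => /orP[/eqP<- Pi|ir Pi].
  by rewrite Pi ge_min lexx.
by case: ifP => _; [rewrite ge_min IH ?orbT | apply: IH].
Qed.

Lemma le_bigmin (I : Type) (r : seq I) (P : pred I) (F : I -> R) a :
  a <= 1 -> (forall i, P i -> a <= F i) -> a <= \big[Num.min/1]_(j <- r | P j) F j.
Proof.
move=> a1 H; elim/big_ind: _ => // x y hx hy; by rewrite le_min hx hy.
Qed.

Lemma lt_bigmin (I : Type) (r : seq I) (P : pred I) (F : I -> R) a :
  a < 1 -> (forall i, P i -> a < F i) -> a < \big[Num.min/1]_(j <- r | P j) F j.
Proof.
move=> a1 H; elim/big_ind: _ => // x y hx hy; by rewrite lt_min hx hy.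
Qed.

Lemma min_lip (a1 a2 b1 b2 d : R) : `|a1 - b1| <= d -> `|a2 - b2| <= d ->
  `|Num.min a1 a2 - Num.min b1 b2| <= d.
Proof.
have aux : forall x1 x2 y1 y2 : R, x1 - y1 <= d -> x2 - y2 <= d ->
    Num.min x1 x2 - Num.min y1 y2 <= d.
  move=> x1 x2 y1 y2 h1 h2; case: (leP y1 y2) => y12.
    apply: le_trans h1; by rewrite lerD2r ge_min lexx.
  apply: le_trans h2; by rewrite lerD2r ge_min lexx orbT.
rewrite !ler_norml => /andP[h1 h2] /andP[h3 h4]; apply/andP; split.
  rewrite lerNl opprB; apply: aux; by rewrite -opprB lerNl.
exact: aux.
Qed.

Lemma bigmin_lip (I : Type) (r : seq I) (P : pred I) (F1 F2 : I -> R) d :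
  0 <= d -> (forall i, P i -> `|F1 i - F2 i| <= d) ->
  `|\big[Num.min/1]_(j <- r | P j) F1 j - \big[Num.min/1]_(j <- r | P j) F2 j| <= d.
Proof.
move=> d0 H.
apply: (big_ind2 (fun a b : R => `|a - b| <= d)) => //.
- by rewrite subrr normr0.
- by move=> *; apply: min_lip.
Qed.
End MinLemmas.

Lemma IDK (R : realType) (A B : set R) : A `&` (B `\` A) = set0.
Proof. by apply/seteqP; split => z // [Az [_ nAz]]. Qed.

Section Hall.
Variables (R : realType) (V : finType).

Definition hallc (W : {set V}) (L : V -> set R) (g : V -> R) :=
  forall S : {set V}, S \subset W -> \sum_(u in S) g u <= m (NU L S).

Definition colK (W : {set V}) (L : V -> set R) (g : V -> R) (phi : V -> set R) :=
  (forall v, v \in W -> [/\ G (phi v), phi v `<=` L v & g v <= m (phi v)]) /\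
  (forall u w, u \in W -> w \in W -> u != w -> phi u `&` phi w = set0).

Lemma colK0 L g : colK finset.set0 L g (fun _ => set0).
Proof. by split => [v|u w]; rewrite inE. Qed.

Lemma hallK n : forall (W : {set V}) (L : V -> set R) (g : V -> R), (#|W| <= n)%N -> (forall v, G (L v)) ->
  (forall v, 0 <= g v) -> hallc W L g -> exists phi, colK W L g phi.
Proof.
elim: n => [|n IH] W L g hW GL g0 hc.
  by move: hW; rewrite leqn0 cards_eq0 => /eqP->; exists (fun _ => set0); exact: colK0.
case: (set_0Vmem W) => [->|[v vW]]; first by exists (fun _ => set0); exact: colK0.
set W' := W :\ v.
have hW' : (#|W'| <= n)%N by move: hW; rewrite (cardsD1 v W) vW.
have W'W : W' \subset W by exact: subD1set.
pose phx x := pre (L v) x.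
have Gphx x : G (phx x) := GI (GL v) (lmeas_oc _ _).
have phxL x : phx x `<=` L v by move=> z [].
have hv : g v <= m (L v).
  by have := hc [set v]%SET; rewrite finset.sub1set vW big_set1 NU1; apply.
have h11 : (-1 : R) <= 1 := le_trans (lerN10 R) ler01.
have [x1 /andP[x1l x1h] hx1] : exists2 x1, -1 <= x1 <= 1 & m (phx x1) = g v.
  apply: ivt2 h11 (pre_lip_abs (GL v)) _; left.
  by rewrite pre_low m0 pre_high // g0 hv.
pose slack (S : {set V}) x := m (NU L S `\` phx x) - \sum_(u in S) g u.
pose k x := \big[Num.min/1]_(S : {set V} | (S != finset.set0) && (S \subset W')) slack S x.
have GNUL S : G (NU L S) := GNU S GL.
have slackE S x : slack S x =
    m (NU L S) - \sum_(u in S) g u - m (pre (NU L S `&` L v) x).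
  rewrite /slack (mDI (GNU S GL) (Gphx x).1).
  have -> : NU L S `&` phx x = pre (NU L S `&` L v) x by rewrite /phx /pre setIA.
  lra.
have klip x y : `|k y - k x| <= `|y - x|.
  apply: bigmin_lip => // S _; rewrite !slackE.
  have := pre_lip_abs (GI (GNUL S) (GL v).1) y x.
  by rewrite [`|x - y|]distrC; apply: le_trans; rewrite le_eqVlt; apply/orP; left; apply/eqP;
    congr (`| _ |); lra.
have k0 : 0 <= k (-1).
  apply: le_bigmin => // S /andP[_ SW']; rewrite /slack /phx pre_low setD0 subr_ge0.
  apply: hc; exact: fintype.subset_trans SW' W'W.
have kle S x : S != finset.set0 -> S \subset W' -> k x <= slack S x.
  by move=> h1 h2; apply: bigmin_le; rewrite ?mem_index_enum ?h1 ?h2.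
have GL'' x u : G (L u `\` phx x) := GD (GL u) (Gphx x).1.
have disjL (A B C : set R) : A `<=` C -> B `&` C = set0 -> A `&` B = set0.
  move=> AC BC; apply/seteqP; split => z // [Az Bz].
  have : (B `&` C) z by split => //; exact: AC.
  by rewrite BC.
case: (leP 0 (k x1)) => kx1.
  pose L' u := L u `\` phx x1.
  have hc' : hallc W' L' g.
    move=> S SW'; rewrite /L' NUD.
    case: (set_0Vmem S) => [->|[u uS]]; first by rewrite big_set0; exact: m_ge0.
    have Sn : S != finset.set0 by apply/set0Pn; exists u.
    by have := le_trans kx1 (kle S x1 Sn SW'); rewrite /slack subr_ge0.
  have [phi' [c1 c2]] := IH W' L' g hW' (GL'' x1) g0 hc'.
  exists (fun u => if u == v then phx x1 else phi' u); split.
    move=> u uW; case: eqP => [->|/eqP uv]; first by split => //; rewrite hx1.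
    have uW' : u \in W' by rewrite in_setD1 uv uW.
    have [h1 h2 h3] := c1 u uW'; split => // z /h2 [Lz _]; exact: Lz.
  move=> u w uW wW uw.
  case: eqP => [eu|/eqP uv]; case: eqP => [ew|/eqP wv].
  - by rewrite eu ew eqxx in uw.
  - have wW' : w \in W' by rewrite in_setD1 wv wW.
    have [_ h2 _] := c1 w wW'.
    rewrite setIC; apply: (disjL _ _ (L' w)) => //.
    by rewrite /L' IDK.
  - have uW' : u \in W' by rewrite in_setD1 uv uW.
    have [_ h2 _] := c1 u uW'.
    apply: (disjL _ _ (L' u)) => //.
    by rewrite /L' IDK.
  - by apply: c2; rewrite ?in_setD1 ?uv ?wv ?uW ?wW.
have [c /andP[cl cx1] kc] : exists2 c, -1 <= c <= x1 & k c = 0.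
  by apply: ivt2 x1l klip _; right; rewrite (ltW kx1) k0.
have slack_ge S : S != finset.set0 -> S \subset W' -> 0 <= slack S c.
  by move=> h1 h2; rewrite -kc; exact: kle.
have [S0 [S0n S0W' S0t]] : exists S0, [/\ S0 != finset.set0, S0 \subset W' & slack S0 c = 0].
  case: (boolP [exists S : {set V}, (S != finset.set0) && (S \subset W') && (slack S c == 0)]).
    by move/existsP => [S /andP[/andP[h1 h2] /eqP h3]]; exists S.
  move/existsPn => H.
  have : 0 < k c.
    apply: lt_bigmin => // S /andP[h1 h2].
    rewrite lt_neqAle slack_ge // andbT eq_sym.
    by have := H S; rewrite h1 h2.
  by rewrite kc ltxx.
have hcx : m (phx c) <= g v.
  by rewrite -hx1; have /andP[h _] := pre_lip (GL v) cx1; rewrite subr_ge0 in h.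
pose g1 u := if u == v then g v - m (phx c) else g u.
pose L1 u := L u `\` phx c.
have GL1 u : G (L1 u) := GL'' c u.
have g10 u : 0 <= g1 u by rewrite /g1; case: eqP => _; rewrite ?subr_ge0.
have g1E u : u != v -> g1 u = g u by rewrite /g1 => /negbTE->.
have vS0 : v \notin S0.
  by apply/negP => /(fintype.subsetP S0W'); rewrite in_setD1 eqxx.
have S0W : S0 \subset W := fintype.subset_trans S0W' W'W.
have sumg1 (S : {set V}) : v \notin S -> \sum_(u in S) g1 u = \sum_(u in S) g u.
  move=> vS; apply: eq_bigr => u uS; apply: g1E.
  by apply: contraNneq vS => <-.
have hc1 : hallc W L1 g1.
  move=> S SW; rewrite /L1 NUD; case: (boolP (v \in S)) => vS.
    rewrite (big_setD1 v vS) /= {1}/g1 eqxx sumg1 ?in_setD1 ?eqxx //.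
    rewrite mD //; last by move=> z /(phxL c) /(NU_sub vS).
      have := hc S SW; rewrite (big_setD1 v vS) /=; lra.
    exact: (Gphx c).1.
  have SW' : S \subset W' by rewrite subsetD1 SW vS.
  rewrite sumg1 //.
  case: (set_0Vmem S) => [->|[u uS]]; first by rewrite big_set0; exact: m_ge0.
  have Sn : S != finset.set0 by apply/set0Pn; exists u.
  by have := slack_ge S Sn SW'; rewrite /slack subr_ge0.
pose N1 := NU L1 S0.
have GN1 : G N1 := GNU S0 GL1.
have tight : m N1 = \sum_(u in S0) g1 u.
  by rewrite sumg1 // /N1 /L1 NUD; move: S0t; rewrite /slack; lra.
have hS0 : (#|S0| <= n)%N := leq_trans (subset_leq_card S0W') hW'.
have [phA [cA1 cA2]] := IH S0 L1 g1 hS0 GL1 g10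
  (fun S SS0 => hc1 S (fintype.subset_trans SS0 S0W)).
pose WB := W :\: S0.
pose L2 u := L1 u `\` N1.
have GL2 u : G (L2 u) := GD (GL1 u) GN1.1.
have hWB : (#|WB| <= n)%N.
  rewrite /WB (cardsDS S0W) leq_subLR; apply: leq_trans hW _.
  by rewrite addnC -addn1 leq_add2l card_gt0.
have hcB : hallc WB L2 g1.
  move=> X XWB; rewrite /L2 NUD.
  have XW : X \subset W by apply: fintype.subset_trans XWB (subsetDl _ _).
  have XS0 : disjoint (mem X) (mem S0).
    rewrite -finset.setI_eq0; apply/eqP/finset.setP => u; rewrite !inE.
    apply/negP => /andP[/(fintype.subsetP XWB)]; rewrite inE => /andP[/negbTE-> _] //.
  have := hc1 (X :|: S0); rewrite finset.subUset XW S0W => /(_ isT).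
  rewrite NUU (eq_bigl [predU X & S0]); last by move=> u; rewrite !inE.
  rewrite bigU // -/N1 -tight.
  have -> : m (NU L1 X `|` N1) = m (NU L1 X `\` N1) + m N1.
    rewrite (mDI (GU (GNU X GL1) GN1) GN1.1).
    have -> : (NU L1 X `|` N1) `\` N1 = NU L1 X `\` N1.
      by rewrite setDUl setDv setU0.
    by have -> : (NU L1 X `|` N1) `&` N1 = N1 by rewrite setIUl setIid; apply: setUidr; exact: subIsetr.
  move=> H; have : \sum_(u in X) g1 u + m N1 <= m (NU L1 X `\` N1) + m N1 by exact: H.
  lra.
have [phB [cB1 cB2]] := IH WB L2 g1 hWB GL2 g10 hcB.
have vWB : v \in WB by rewrite inE vS0 vW.
have S0v u : u \in S0 -> u != v.
  by move=> uS0; apply/eqP => uv; rewrite -uv uS0 in vS0.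
have PB x z : x \in WB -> phB x z -> ~ N1 z /\ ~ phx c z.
  by move=> xWB; case: (cB1 x xWB) => _ h _ /h [[_ h1] h2].
have PA x z : x \in S0 -> phA x z -> N1 z /\ ~ phx c z.
  move=> xS0; case: (cA1 x xS0) => _ h _ /h [Lx Px]; split => //.
  by apply: (NU_sub xS0); split.
have emp (A B : set R) z : A `&` B = set0 -> A z -> B z -> False.
  by move=> AB Az Bz; have : (A `&` B) z by []; rewrite AB.
exists (fun u => if u \in S0 then phA u else if u == v then phB v `|` phx c else phB u).
split.
  move=> u uW; case: ifP => uS0.
    have [h1 h2 h3] := cA1 u uS0; split => //.
      by move=> z /h2 [Lz _].
    by rewrite -g1E // S0v.
  have uWB : u \in WB by rewrite inE uS0 uW.
  case: eqP => [->|/eqP uv].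
    have [h1 h2 h3] := cB1 v vWB; split.
    - exact: GU h1 (Gphx c).
    - by move=> z [/h2 [[Lz _] _]|/phxL].
    - rewrite mU //; last first.
        apply/seteqP; split => z // [/(PB v z vWB) [_ h] h']; exact: h h'.
      have : g1 v = g v - m (phx c) by rewrite /g1 eqxx.
      lra.
  have [h1 h2 h3] := cB1 u uWB; split => //.
    by move=> z /h2 [[Lz _] _].
  by rewrite -g1E.
move=> u w uW wW uw; apply/seteqP; split => z // [].
case uS0: (u \in S0); case wS0: (w \in S0) => /=.
- by move=> Hu Hw; apply: (emp _ _ z (cA2 u w uS0 wS0 uw)).
- have wWB : w \in WB by rewrite inE wS0 wW.
  move=> /(PA u z uS0) [N1z nP]; case: eqP => _.
    by case=> [/(PB v z vWB) [] |].
  by move/(PB w z wWB) => [].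
- have uWB : u \in WB by rewrite inE uS0 uW.
  move=> + /(PA w z wS0) [N1z nP]; case: eqP => _.
    by case=> [/(PB v z vWB) [] |].
  by move/(PB u z uWB) => [].
- have uWB : u \in WB by rewrite inE uS0 uW.
  have wWB : w \in WB by rewrite inE wS0 wW.
  case: eqP => [eu|/eqP uv]; case: eqP => [ew|/eqP wv].
  + by rewrite eu ew eqxx in uw.
  + move=> Hu /[dup] Hw /(PB w z wWB) [_ nP].
    case: Hu => // Hu; rewrite eu in uw.
    by apply: (emp _ _ z (cB2 v w vWB wWB uw)).
  + move=> /[dup] Hu /(PB u z uWB) [_ nP] Hw.
    case: Hw => // Hw; rewrite ew in uw.
    by apply: (emp _ _ z (cB2 u v uWB vWB uw)).
  + by move=> Hu Hw; apply: (emp _ _ z (cB2 u w uWB wWB uw)).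
Qed.
End Hall.

Section Match.
Variable (V : finType).
Implicit Types (M : {set {set V}}).

Lemma edgeP M e : is_matching M -> e \in M -> exists u w, u != w /\ e = [set u; w]%SET.
Proof. by move=> [h _] eM; apply/cards2P; rewrite h. Qed.

Lemma coverP M x : reflect (exists2 e : {set V}, e \in M & x \in e) (x \in VM M).
Proof. by rewrite /VM /cover; apply: (iffP finset.bigcupP) => -[e] eM xe; exists e. Qed.

Lemma edge_uniq M e f x : is_matching M -> e \in M -> f \in M -> x \in e -> x \in f -> e = f.
Proof.
move=> [_ h] eM fM xe xf; apply/eqP; apply: contraT => ef.
by have := h e f eM fM ef => /disjointFr/(_ xe); rewrite xf.
Qed.

Lemma trivM M : is_matching M -> finset.trivIset M.
Proof. by move=> [_ h]; apply/finset.trivIsetP => e f eM fM; exact: h. Qed.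

Lemma in2 (u w a b : V) : a \in [set u; w]%SET -> b \in [set u; w]%SET -> a != b ->
  (a = u /\ b = w) \/ (a = w /\ b = u).
Proof.
move=> /set2P [->|->] /set2P [->|->]; rewrite ?eqxx //; by [left | right].
Qed.

Lemma set2C (a b : V) : [set a; b]%SET = [set b; a]%SET.
Proof. by rewrite finset.setUC. Qed.

End Match.

Section Emax.
Variables (R : realType) (V : finType).

Definition emaxR (g : V -> R) (e : {set V}) : R := \big[Num.max/0]_(u in e) g u.

Lemma emax_ge (g : V -> R) (e : {set V}) x : x \in e -> g x <= emaxR g e.
Proof.
rewrite /emaxR => xe.
have : x \in index_enum V by rewrite mem_index_enum.
elim: (index_enum V) => [//|a r IH]; rewrite inE big_cons => /orP[/eqP<-|xr].
  by rewrite xe le_max lexx.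
by case: ifP => _; [rewrite le_max IH ?orbT | apply: IH].
Qed.

Lemma emax_le (g : V -> R) (e : {set V}) a : 0 <= a -> (forall x, x \in e -> g x <= a) -> emaxR g e <= a.
Proof. by move=> a0 H; rewrite /emaxR; elim/big_ind: _ => // x y hx hy; rewrite ge_max hx hy. Qed.

Lemma emax_ge0 (g : V -> R) (e : {set V}) : 0 <= emaxR g e.
Proof.
rewrite /emaxR; elim: (index_enum V) => [|a r IH]; rewrite ?big_nil ?big_cons //.
by case: ifP => _ //; rewrite le_max IH orbT.
Qed.

Lemma emax_eq (g g' : V -> R) (e : {set V}) : (forall x, x \in e -> g x = g' x) -> emaxR g e = emaxR g' e.
Proof. by move=> H; apply: eq_bigr. Qed.

Lemma emax_shift (g : V -> R) (e : {set V}) t x0 : x0 \in e -> 0 <= t -> t <= g x0 ->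
  emaxR (fun x => if x \in e then g x - t else g x) e = emaxR g e - t.
Proof.
move=> x0e t0 tg; apply/eqP; rewrite eq_le; apply/andP; split.
  apply: emax_le; first by rewrite subr_ge0 (le_trans tg) // emax_ge.
  by move=> x xe; rewrite xe lerD2r emax_ge.
rewrite lerBlDr; apply: emax_le; first by rewrite addr_ge0 // emax_ge0.
move=> x xe; rewrite -lerBlDr.
by have := emax_ge (fun x => if x \in e then g x - t else g x) xe; rewrite /= xe.
Qed.

End Emax.

Section MainDefs.
Variables (R : realType) (V : finType).
Implicit Types (M : {set {set V}}) (g : V -> R) (L : V -> set R).

Definition condM M g L :=
  [/\ (forall v, v \notin VM M ->
        \sum_(u | u \notin VM M) g u + \sum_(e in M) emaxR g e <= m (L v)),
      (forall v, v \in VM M -> g v + \sum_(e in M | v \notin e) emaxR g e <= m (L v)) &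
      (forall u v, u != v -> ([set u; v] \in M)%SET -> \sum_w g w <= m (L u) + m (L v))].

Definition colM M g L (phi : V -> set R) :=
  (forall v, [/\ G (phi v), phi v `<=` L v & g v <= m (phi v)]) /\
  (forall u v, Hadj M u v -> phi u `&` phi v = set0).

Definition nonbad g L u w := g u = 0 \/ g w = 0 \/ m (L u `&` L w) = 0.

Lemma mUI (A B : set R) : G A -> G B -> m (A `|` B) = m A + m B - m (A `&` B).
Proof.
move=> GA GB.
have E1 := mDI (GU GA GB) GB.1.
have E2 := mDI GA GB.1.
have D : (A `|` B) `\` B = A `\` B by rewrite setDUl setDv setU0.
have H : (A `|` B) `&` B = B by rewrite setIUl setIid; apply: setUidr; exact: subIsetr.
rewrite D H in E1.
lra.
Qed.

Lemma sum_sub_le g (S : {set V}) : (forall v, 0 <= g v) -> \sum_(x in S) g x <= \sum_x g x.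
Proof.
move=> g0; rewrite [X in _ <= X](bigID (fun x => x \in S)) /= lerDl.
by apply: sumr_ge0 => x _; exact: g0.
Qed.

End MainDefs.

Section Base.
Variables (R : realType) (V : finType).
Implicit Types (M : {set {set V}}) (g : V -> R) (L : V -> set R).

Lemma base_hall M g L : is_matching M -> (forall v, G (L v)) -> (forall v, 0 <= g v) ->
  condM M g L -> (forall u w, u != w -> ([set u; w] \in M)%SET -> nonbad g L u w) ->
  hallc [set: V]%SET L g.
Proof.
move=> hM GL g0 [c1 c2 c3] nb S _.
have mNU x : x \in S -> m (L x) <= m (NU L S).
  by move=> xS; apply: mle (GNU S GL) (GL x).1 (NU_sub xS).
case: (boolP [exists u, exists w, [&& u != w, ([set u; w] \in M)%SET, u \in S, w \in S &
                                 (g u != 0) && (g w != 0)]]).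
  move/existsP=> [u /existsP [w /and5P [uw eM uS wS /andP[gu gw]]]].
  have [|[|I0]] := nb u w uw eM; [by move/eqP: gu | by move/eqP: gw |].
  have H1 : m (L u `|` L w) <= m (NU L S).
    apply: mle (GNU S GL) (GU (GL u) (GL w)).1 _.
    by move=> z [/(NU_sub uS)|/(NU_sub wS)].
  have H2 := mUI (GL u) (GL w).
  have H3 := c3 u w uw eM.
  have H4 := sum_sub_le S g0.
  lra.
move/existsPn => H.
have Hb u w : u != w -> ([set u; w] \in M)%SET -> u \in S -> w \in S -> g u = 0 \/ g w = 0.
  move=> uw eM uS wS; have := H u; move/existsPn/(_ w).
  rewrite uw eM uS wS /= negb_and !negbK => /orP[/eqP|/eqP]; by [left|right].
pose gS x := if x \in S then g x else 0.
have gS0 x : 0 <= gS x by rewrite /gS; case: ifP.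
have gSle x : gS x <= g x by rewrite /gS; case: ifP.
have sumE : \sum_(x in S) g x =
    \sum_(x in ~: VM M) gS x + \sum_(e in M) \sum_(x in e) gS x.
  rewrite big_mkcond /= (bigID (fun x => x \in VM M)) /= addrC.
  rewrite -(finset.big_trivIset _ (trivM hM)).
  congr (_ + _); apply: eq_bigl => x; by rewrite ?inE.
have pe e v : e \in M -> v \in e -> v \in S ->
    exists y, [/\ y \in S, y \in e & \sum_(x in e) gS x <= g y].
  move=> eM ve vS; have [u [w [uw Ee]]] := edgeP hM eM.
  have sE : \sum_(x in e) gS x = gS u + gS w.
    by rewrite Ee big_setU1 ?inE // big_set1.
  rewrite sE /gS; case: (boolP (u \in S)) => uS; case: (boolP (w \in S)) => wS.
  - have eM' := eM; rewrite Ee in eM'.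
    case: (Hb u w uw eM' uS wS) => [gu|gw].
      by exists w; rewrite gu add0r Ee !inE eqxx orbT wS.
    by exists u; rewrite gw addr0 Ee !inE eqxx uS.
  - by exists u; rewrite addr0 Ee !inE eqxx uS.
  - by exists w; rewrite add0r Ee !inE eqxx orbT wS.
  - by move: ve; rewrite Ee => /set2P [] E; rewrite E ?(negbTE uS) ?(negbTE wS) in vS.
have pe_max e : e \in M -> \sum_(x in e) gS x <= emaxR g e.
  move=> eM; case: (boolP [exists v, (v \in e) && (v \in S)]).
    move/existsP => [v /andP[ve vS]]; have [y [yS ye hy]] := pe e v eM ve vS.
    exact: le_trans hy (emax_ge g ye).
  move/existsPn => nv; rewrite big1 ?emax_ge0 // => x xe.
  by rewrite /gS; have := nv x; rewrite xe /= => /negbTE->.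
have sum_edges_le (P : pred {set V}) :
    \sum_(e in M | P e) \sum_(x in e) gS x <= \sum_(e in M | P e) emaxR g e.
  by apply: ler_sum => e /andP[eM _]; exact: pe_max.
case: (boolP [exists a, (a \in S) && (a \notin VM M)]).
  move/existsP => [a /andP[aS aA]].
  have := c1 a aA; have := mNU a aS.
  have h1 : \sum_(x in ~: VM M) gS x <= \sum_(u | u \notin VM M) g u.
    rewrite (eq_bigl (fun u => u \notin VM M)); last by move=> x; rewrite inE.
    by apply: ler_sum => x _.
  have h2 := sum_edges_le xpredT.
  rewrite sumE.
  have E : \sum_(e in M | xpredT e) emaxR g e = \sum_(e in M) emaxR g e.
    by apply: eq_bigl => e; rewrite andbT.
  have E' : \sum_(e in M | xpredT e) \sum_(x in e) gS x = \sum_(e in M) \sum_(x in e) gS x.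
    by apply: eq_bigl => e; rewrite andbT.
  rewrite E E' in h2.
  lra.
move/existsPn => nA.
case: (set_0Vmem S) => [->|[v vS]]; first by rewrite big_set0; exact: m_ge0.
have vVM : v \in VM M by have := nA v; rewrite vS /= negbK.
have [ev evM vev] := coverP M v vVM.
have [y [yS yev hy]] := pe ev v evM vev vS.
have yVM : y \in VM M by apply/coverP; exists ev.
have h0 : \sum_(x in ~: VM M) gS x = 0.
  apply: big1 => x; rewrite inE => xA; rewrite /gS.
  by have := nA x; rewrite xA andbT => /negbTE->.
have hc2 := c2 y yVM.
have E : \sum_(e in M | y \notin e) emaxR g e = \sum_(e in M | e != ev) emaxR g e.
  apply: eq_bigl => e; case: (boolP (e \in M)) => //= eM.
  case: (boolP (y \in e)) => ye /=.
    by rewrite (edge_uniq hM eM evM ye yev) eqxx.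
  by apply/esym; apply: contraNneq ye => ->.
rewrite E in hc2.
have h2 := sum_edges_le (fun e => e != ev).
rewrite sumE h0 add0r (bigD1 ev evM) /=.
have := mNU y yS.
lra.
Qed.

End Base.

Lemma min3P (R : realType) (a b c : R) : 0 <= a -> 0 <= b -> 0 <= c ->
  [/\ 0 <= Num.min a (Num.min b c), Num.min a (Num.min b c) <= a,
     Num.min a (Num.min b c) <= b & Num.min a (Num.min b c) <= c].
Proof.
move=> ha hb hc; split.
- by rewrite !le_min ha hb hc.
- by rewrite ge_min lexx.
- by rewrite !ge_min lexx orbT.
- by rewrite !ge_min lexx !orbT.
Qed.

Lemma min3_cases (R : realType) (a b c : R) :
  Num.min a (Num.min b c) = a \/ Num.min a (Num.min b c) = b \/ Num.min a (Num.min b c) = c.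
Proof.
case: (leP a (Num.min b c)) => h; first by left.
case: (leP b c) => h'; by [right; left | right; right].
Qed.

Section MainR.
Variables (R : realType) (V : finType).
Implicit Types (M : {set {set V}}) (g : V -> R) (L : V -> set R).

Lemma main_base M g L : is_matching M -> (forall v, G (L v)) -> (forall v, 0 <= g v) ->
  condM M g L -> (forall u w, u != w -> ([set u; w] \in M)%SET -> nonbad g L u w) ->
  exists phi, colM M g L phi.
Proof.
move=> hM GL g0 cM nb.
have [phi [h1 h2]] := hallK (leqnn _) GL g0 (base_hall hM GL g0 cM nb).
exists phi; split; first by move=> v; apply: h1; rewrite inE.
by move=> u v /andP[uv _]; apply: h2; rewrite ?inE.
Qed.

Lemma mainR n : forall (P : {set {set V}}) M g L, (#|P| <= n)%N -> P \subset M ->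
  is_matching M -> (forall v, G (L v)) -> (forall v, 0 <= g v) -> condM M g L ->
  (forall u w, u != w -> ([set u; w] \in M)%SET -> ([set u; w] \notin P)%SET -> nonbad g L u w) ->
  exists phi, colM M g L phi.
Proof.
elim: n => [|n IH] P M g L hP PM hM GL g0 cM nb.
  move: hP; rewrite leqn0 cards_eq0 => /eqP P0.
  by apply: main_base => // u w uw eM; apply: nb; rewrite ?P0 ?inE.
case: (set_0Vmem P) => [P0|[e eP]].
  by apply: main_base => // u w uw eM; apply: nb; rewrite ?P0 ?inE.
have eM : e \in M by move/fintype.subsetP: PM; apply.
have [u [w [uw Ee]]] := edgeP hM eM.
pose I := L u `&` L w.
have GI' : G I := GI (GL u) (GL w).1.
have [t0 tu tw tI] := min3P (g0 u) (g0 w) (m_ge0 I).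
set t := Num.min (g u) _ in t0 tu tw tI.

have [C [GC CI mC]] := chunk GI' (t := t) (ltac:(by rewrite t0 tI)).
have [c1 c2 c3] := cM.
have ue : u \in e by rewrite Ee !inE eqxx.
have we : w \in e by rewrite Ee !inE eqxx orbT.
have eP' x : x \in e -> x = u \/ x = w by rewrite Ee => /set2P.
have CL x : x \in e -> C `<=` L x.
  by move=> /eP' [->|->] z /CI [].
pose g' x := if x \in e then g x - t else g x.
pose L' x := L x `\` C.
have GL' x : G (L' x) := GD (GL x) GC.1.
have g'0 x : 0 <= g' x.
  rewrite /g'; case: ifP => xe //; rewrite subr_ge0.
  by case: (eP' x xe) => ->.
have mL' x : m (L x) - t <= m (L' x).
  have E := mDI (GL x) GC.1.
  have : m (L x `&` C) <= m C by apply: mle GC (lmeasI (GL x).1 GC.1) _ => z [].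
  rewrite mC /L'; lra.
have notA x : x \notin VM M -> x \notin e.
  by apply: contraNN => xe; apply/coverP; exists e.
have edisj f x : f \in M -> f != e -> x \in f -> x \notin e.
  move=> fM fe xf; apply: contraNN fe => xe; apply/eqP.
  exact: edge_uniq hM fM eM xf xe.
have sumA : \sum_(x | x \notin VM M) g' x = \sum_(x | x \notin VM M) g x.
  by apply: eq_bigr => x hx; rewrite /g' (negbTE (notA x hx)).
have emf f : f \in M -> f != e -> emaxR g' f = emaxR g f.
  move=> fM fe; apply: emax_eq => x xf.
  by rewrite /g' (negbTE (edisj f x fM fe xf)).
have eme : emaxR g' e = emaxR g e - t by apply: emax_shift ue t0 tu.
have sumM : \sum_(f in M) emaxR g' f = \sum_(f in M) emaxR g f - t.
  rewrite (bigD1 e eM) [in RHS](bigD1 e eM) /= eme.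
  have -> : \sum_(f in M | f != e) emaxR g' f = \sum_(f in M | f != e) emaxR g f.
    by apply: eq_bigr => f /andP[fM fe]; apply: emf.
  lra.
have sumMv v : \sum_(f in M | v \notin f) emaxR g' f =
    \sum_(f in M | v \notin f) emaxR g f - (if v \in e then 0 else t).
  case: (boolP (v \in e)) => ve.
    rewrite subr0; apply: eq_bigr => f /andP[fM vf]; apply: emf => //.
    by apply: contraNneq vf => ->.
  have eM' : (e \in M) && (v \notin e) by rewrite eM ve.
  rewrite (bigD1 e eM') [in RHS](bigD1 e eM') /= eme.
  have -> : \sum_(i | (i \in M) && (v \notin i) && (i != e)) emaxR g' i =
            \sum_(i | (i \in M) && (v \notin i) && (i != e)) emaxR g i.
    by apply: eq_bigr => f /andP[/andP[fM _] fe]; apply: emf.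
  lra.
have sumall : \sum_x g' x = \sum_x g x - (t + t).
  have -> : \sum_x g' x = \sum_x (g x - (if x \in e then t else 0)).
    by apply: eq_bigr => x _; rewrite /g'; case: ifP; rewrite ?subr0.
  rewrite sumrB -big_mkcond /= sumr_const.
  by have := hM.1 e eM; rewrite -mulr2n => ->.
have cM' : condM M g' L'.
  split.
  - move=> v vA; rewrite sumA sumM.
    have := c1 v vA; have := mL' v; lra.
  - move=> v vVM; rewrite sumMv.
    have := c2 v vVM; have := mL' v.
    by rewrite /g'; case: ifP => ve /=; lra.
  - move=> a b ab abM; rewrite sumall.
    have := c3 a b ab abM; have := mL' a; have := mL' b; lra.
have DI (A B D : set R) : (A `\` D) `&` (B `\` D) = (A `&` B) `\` D.
  apply/seteqP; split => z.
    by case=> [[Az nDz] [Bz _]]; split.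
  by case=> [[Az Bz] nDz]; split; split.
have nb' a b : a != b -> ([set a; b] \in M)%SET -> ([set a; b] \notin P :\ e)%SET ->
    nonbad g' L' a b.
  move=> ab abM abP; case: (eqVneq [set a; b]%SET e) => abe.
    have ae : a \in e by rewrite -abe !inE eqxx.
    have be : b \in e by rewrite -abe !inE eqxx orbT.
    have g'a : g' a = g a - t by rewrite /g' ae.
    have g'b : g' b = g b - t by rewrite /g' be.
    have hab2 : (a = u /\ b = w) \/ (a = w /\ b = u).
      by apply: in2 => //; rewrite -Ee.
    have [tE|[tE|tE]] := min3_cases (g u) (g w) (m I).
    - case: hab2 => -[ea eb]; rewrite /nonbad g'a g'b ea eb /t tE subrr;
        by [left | right; left].
    - case: hab2 => -[ea eb]; rewrite /nonbad g'a g'b ea eb /t tE subrr;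
        by [left | right; left].
    - right; right; rewrite /L' DI.
      have -> : L a `&` L b = I.
        by case: hab2 => -[-> ->] //; rewrite /I setIC.
      by rewrite (mD GI' GC.1 CI) mC /t tE subrr.
  have abP' : ([set a; b] \notin P)%SET by move: abP; rewrite in_setD1 abe.
  have ae : a \notin e by apply: edisj abM abe _; rewrite !inE eqxx.
  have be : b \notin e by apply: edisj abM abe _; rewrite !inE eqxx orbT.
  rewrite /nonbad /g' (negbTE ae) (negbTE be).
  case: (nb a b ab abM abP') => [->|[->|I0]]; [by left | by right; left | right; right].
  apply/eqP; rewrite eq_le m_ge0 andbT -I0 /L' DI.
  apply: mle (GI (GL a) (GL b).1) _ _; last by move=> z [].
  exact: lmeasD (lmeasI (GL a).1 (GL b).1) GC.1.
have hP' : (#|P :\ e| <= n)%N by move: hP; rewrite (cardsD1 e P) eP.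
have PM' : P :\ e \subset M := fintype.subset_trans (subD1set P e) PM.
have [phi' [h1 h2]] := IH (P :\ e) M g' L' hP' PM' hM GL' g'0 cM' nb'.
exists (fun x => if x \in e then phi' x `|` C else phi' x); split.
  move=> x; have [G1 S1 m1] := h1 x; case: ifP => xe.
    split; first exact: GU G1 GC.
      by move=> z [/S1 [Lz _]|/(CL x xe)].
    rewrite mU //; last by apply/seteqP; split => z // [/S1 [_ nC] Cz]; exact: nC Cz.
    by move: m1; rewrite /g' xe mC; lra.
  split => //; first by move=> z /S1 [].
  by move: m1; rewrite /g' xe.
move=> a b hab; have /andP[ab abM] := hab.
have Hab' := h2 a b hab.
have emp (A B : set R) z : A `&` B = set0 -> A z -> B z -> False.
  by move=> AB Az Bz; have : (A `&` B) z by []; rewrite AB.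
case ae: (a \in e); case be: (b \in e).
- exfalso; move: abM; rewrite Ee in ae be; case: (in2 ae be ab) => -[-> ->].
    by rewrite -Ee eM.
  by rewrite set2C -Ee eM.
- apply/seteqP; split => z // [[Az|Cz] Bz]; first exact: (emp _ _ z Hab' Az Bz).
  by have [_ S1 _] := h1 b; move/S1: Bz => [_ /(_ Cz)].
- apply/seteqP; split => z // [Az [Bz|Cz]]; first exact: (emp _ _ z Hab' Az Bz).
  by have [_ S1 _] := h1 a; move/S1: Az => [_ /(_ Cz)].
- exact: Hab'.
Qed.
End MainR.

Lemma ratr_max (R : realType) (a b : rat) :
  (ratr (Num.max a b) : R) = Num.max (ratr a) (ratr b).
Proof.
case: (leP a b) => ab; case: (leP (ratr a : R) (ratr b)) => // h.
  by move: h; rewrite ltr_rat ltNge ab.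
by move: h; rewrite ler_rat leNgt ab.
Qed.

Lemma ratr_emax (R : realType) (V : finType) (g : V -> rat) (e : {set V}) :
  (ratr (emax g e) : R) = emaxR (fun v => ratr (g v)) e.
Proof.
rewrite /emax /emaxR; apply: (big_morph _ (@ratr_max R) _).
exact: rmorph0.
Qed.

Local Close Scope classical_set_scope.
Unset Implicit Arguments.

Theorem lemma2p11 (R : realType) (V : finType) (M : {set {set V}})
    (g : V -> rat) (L : V -> set R) :
  is_matching M -> demand g -> frac_list_assignment L ->
  (forall v, v \notin VM M ->
     ((ratr (\sum_(u | u \notin VM M) g u + \sum_(e in M) emax g e) : R)%:E
        <= lmu (L v))%E) ->
  (forall v, v \in VM M ->
     ((ratr (g v + \sum_(e in M | v \notin e) emax g e) : R)%:E
        <= lmu (L v))%E) ->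
  (forall u v, u != v -> ([set u; v] \in M)%SET ->
     ((ratr (\sum_w g w) : R)%:E <= lmu (L u) + lmu (L v))%E) ->
  exists phi : V -> set R, frac_coloring M g L phi.
Proof.
move=> hM hg hL h1 h2 h3.
pose gR v : R := ratr (g v).
have GL v : G (L v) by case: (hL v).
have g0 v : 0 <= gR v by rewrite /gR ler0q; case/andP: (hg v).
have sE (P : pred {set V}) : (ratr (\sum_(e in M | P e) emax g e) : R) =
    \sum_(e in M | P e) emaxR gR e.
  by rewrite rmorph_sum; apply: eq_bigr => e _; exact: ratr_emax.
have cM : condM M gR L.
  split.
  - move=> v vA; have := h1 v vA.
    have E : (ratr (\sum_(u | u \notin VM M) g u + \sum_(e in M) emax g e) : R) =
        \sum_(u | u \notin VM M) gR u + \sum_(e in M) emaxR gR e.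
      rewrite rmorphD rmorph_sum; congr (_ + _).
      by rewrite rmorph_sum; apply: eq_bigr => e _; exact: ratr_emax.
    by rewrite (G_fin (GL v)) lee_fin E.
  - move=> v vM; have := h2 v vM.
    have E : (ratr (g v + \sum_(e in M | v \notin e) emax g e) : R) =
        gR v + \sum_(e in M | v \notin e) emaxR gR e.
      by rewrite rmorphD; congr (_ + _); exact: (sE (fun e => v \notin e)).
    by rewrite (G_fin (GL v)) lee_fin E.
  - move=> u v uv uvM; have := h3 u v uv uvM.
    have E : (ratr (\sum_w g w) : R) = \sum_w gR w by rewrite rmorph_sum.
    by rewrite (G_fin (GL u)) (G_fin (GL v)) -EFinD lee_fin E.
have [phi [hp1 hp2]] := mainR (leqnn #|M|) (fintype.subxx M) hM GL g0 cM
  (fun u w _ h h' => ltac:(by rewrite h in h')).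
exists phi; split => // v; have [Gp Sp mp] := hp1 v.
by split => //; [case: Gp | rewrite (G_fin Gp) lee_fin].
Qed.
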